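(* Let $C$ be a concurrent vertex map with straight road map $(\{H^\alpha_p\},\{V^\beta_q\})$. (a) Let $\alpha\in V_{\rm target}$ and $1\le p\le u_\alpha$. Then the row coordinate of $P^\alpha_{pq'}$ is $p$ for all $q'\ge p+1+v_\alpha-u_\alpha$, and the row coordinate of $Q^\alpha_{pq'}$ is $p$ for all $q'\ge p+v_\alpha-u_\alpha$ (with $q'\le v_\alpha$). Consequently, for $q'\ge p+1+v_\alpha-u_\alpha$, the subpath $P^\alpha_{pq'}\rightsquigarrow Q^\alpha_{pq'}$ contains no horizontal NW corner, and $P^\alpha_{pq'}+(1,0)=Q^\alpha_{p+1,q'}$. (b) Let $\beta\in V_{\rm source}$ and $1\le q\le u_\beta$. Then the column coordinate of $Q^\beta_{p'q}$ is $q$ for all $p'\ge q+1+v_\beta-u_\beta$, and the column coordinate of $P^\beta_{p'q}$ is $q$ for all $p'\ge q+v_\beta-u_\beta$ (with $p'\le v_\beta$). Consequently, for $p'\ge q+1+v_\beta-u_\beta$, the subpath $Q^\beta_{p'q}\rightsquigarrow P^\beta_{p'q}$ contains no vertical NW corner, and $Q^\beta_{p'q}+(0,1)=P^\beta_{p',q+1}$.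
   Context: Let $\mathcal{Q}$ be a bipartite quiver with vertex set $V_{\mathcal{Q}}=V_{\rm source}\sqcup V_{\rm target}$ and arrows $h_1,\dots,h_r$, each $h_k$ from $\mathrm{s}(h_k)\in V_{\rm source}$ to $\mathrm{t}(h_k)\in V_{\rm target}$. Let $\mathbf{m}=(m_\gamma)$, $\mathbf{u}=(u_\gamma)$ be tuples of nonnegative integers indexed by $V_{\mathcal{Q}}$. For $k=1,\dots,r$ let $X^{(k)}$ be an $m_{\mathrm{t}(h_k)}\times m_{\mathrm{s}(h_k)}$ matrix of variables $x^{(k)}_{ij}$ (page $k$). For $\alpha\in V_{\rm target}$ with $r_1<\dots<r_s$ the indices of arrows with target $\alpha$, $A_\alpha=[X^{(r_1)}|\cdots|X^{(r_s)}]$; for $\beta\in V_{\rm source}$ with $r'_1<\dots<r'_t$ the indices of arrows with source $\beta$, $A_\beta$ is the stack of $X^{(r'_1)},\dots,X^{(r'_t)}$ top to bottom. $a_\gamma\times b_\gamma$ is the size of $A_\gamma$; $v_\alpha=\sum_{k:\mathrm{t}(h_k)=\alpha}u_{\mathrm{s}(h_k)}$, $v_\beta=\sum_{k:\mathrm{s}(h_k)=\beta}u_{\mathrm{t}(h_k)}$. Standing assumption: $0<u_\gamma\le\min(a_\gamma,b_\gamma)$, $u_\alpha\le v_\alpha$, $u_\beta\le v_\beta$. $L=\{(i,j,k):1\le k\le r,1\le i\le m_{\mathrm{t}(h_k)},1\le j\le m_{\mathrm{s}(h_k)}\}$; $\phi_\gamma$ sends a position $(p,q)$ of $A_\gamma$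 to $(i,j,k)$ if that entry is $x^{(k)}_{ij}$. Coordinates $(i,j)$: $i$ row (downward, north = decreasing $i$), $j$ column (eastward). Paths: lattice paths with unit steps east $(0,1)$ or north $(-1,0)$ from SW endpoint to NE endpoint; nonintersecting = no shared vertex. A corner $R$ is a NW corner if $R+(1,0),R+(0,1)$ are on the path. A road map: for each $\alpha$ nonintersecting paths $H^\alpha_1,\dots,H^\alpha_{u_\alpha}$ in $A_\alpha$, $H^\alpha_p$ with endpoints $(a_\alpha-u_\alpha+p,1)$, $(p,b_\alpha)$; for each $\beta$ nonintersecting paths $V^\beta_1,\dots,V^\beta_{u_\beta}$ in $A_\beta$, $V^\beta_q$ with endpoints $(1,b_\beta-u_\beta+q)$, $(a_\beta,q)$; vertices are regarded as points of $L$ via $\phi_\gamma$. Straight: each corner of a horizontal path lies on a vertical path and vice versa. A concurrent vertex map is a set $C\subseteq L$ which, for some straight road map (its road map), equals the set of $(i,j,k)$ lying on some $H^{\mathrm{t}(h_k)}_p$ and some $V^{\mathrm{s}(h_k)}_q$. For $\alpha$, the paths $V^{\mathrm{s}(h_{r_1})}_1,\dots,V^{\mathrm{s}(h_{r_1})}_{u_{\mathrm{s}(h_{r_1})}},\dots,V^{\mathrm{s}(h_{r_s})}_{u_{\mathrm{s}(h_{r_s})}}$, restricted to their pages and transported into $A_\alpha$ via $\phi_\alpha^{-1}\circ\phi_{\mathrm{s}(h_{r_\ell})}$, are called $V^\alpha_1,\dots,V^\alpha_{v_\alpha}$ in this order; $H^\alpha_p\cap V^\alpha_q$ is a nonempty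 connected subpath with SW endpoint $P^\alpha_{pq}$ and NE endpoint $Q^\alpha_{pq}$ (coordinates taken in $A_\alpha$). Symmetrically for $\beta$, the paths $H^{\mathrm{t}(h_{r'_1})}_1,\dots,H^{\mathrm{t}(h_{r'_t})}_{u_{\mathrm{t}(h_{r'_t})}}$ transported into $A_\beta$ are $H^\beta_1,\dots,H^\beta_{v_\beta}$, and $P^\beta_{pq},Q^\beta_{pq}$ are the SW and NE endpoints of $H^\beta_p\cap V^\beta_q$ (coordinates in $A_\beta$). A horizontal NW corner is a point of $C$ of the form $\phi_\alpha(P)$ with $P$ a NW corner of some $H^\alpha_p$; a vertical NW corner is $\phi_\beta(P)$ with $P$ a NW corner of some $V^\beta_q$; a subpath ''contains'' such a corner if the corresponding point $P$ lies on it. *)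

(* Defs.v *)
From mathcomp Require Import all_boot.

(* Bipartite quiver data: sources are 'I_nS, targets 'I_nT, arrows h_k are
   k : 'I_nr (arrow h_{k+1} of the paper), from src k to tgt k.
   All matrix coordinates below are 1-based, as in the paper:
   (i, j) = (row, column), north = decreasing i, east = increasing j. *)
Record qdata := QData {
  nS : nat; nT : nat; nr : nat;
  src : 'I_nr -> 'I_nS; tgt : 'I_nr -> 'I_nT;
  mS : 'I_nS -> nat; mT : 'I_nT -> nat;
  uS : 'I_nS -> nat; uT : 'I_nT -> nat }.

Definition pos := (nat * nat)%type.

Definition Lpt (Q : qdata) := (nat * nat * 'I_(nr Q))%type.

Definition lstep (x y : pos) : bool :=
  ((y.1 == x.1) && (y.2 == x.2.+1)) || ((y.1.+1 == x.1) && (y.2 == x.2)).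

Definition inbox (a b : nat) (x : pos) : bool := (0 < x.1 <= a) && (0 < x.2 <= b).

Definition lattice_path_def (a b : nat) (sw ne : pos) (P : seq pos) : bool :=
  if P is x :: P' then [&& x == sw, path lstep x P', last x P' == ne & all (inbox a b) P]
  else false.

Definition nw_corner (R : pos) (P : seq pos) : bool :=
  infix [:: (R.1.+1, R.2); R; (R.1, R.2.+1)] P.
Definition se_corner (R : pos) (P : seq pos) : bool :=
  infix [:: (R.1, R.2.-1); R; (R.1.-1, R.2)] P.
Definition corner (R : pos) (P : seq pos) : bool := nw_corner R P || se_corner R P.

Definition subpath_of (s : seq pos) (x y : pos) : seq pos :=
  drop (index x s) (take (index y s).+1 s).

Section Defs.
Variable Q : qdata.

Definition arrT (a : 'I_(nT Q)) : seq 'I_(nr Q) :=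
  [seq k <- enum 'I_(nr Q) | tgt Q k == a].
Definition arrS (b : 'I_(nS Q)) : seq 'I_(nr Q) :=
  [seq k <- enum 'I_(nr Q) | src Q k == b].

(* sizes a_gamma x b_gamma of A_gamma, and v_gamma *)
Definition aT a := mT Q a.
Definition bT a := \sum_(k <- arrT a) mS Q (src Q k).
Definition aS b := \sum_(k <- arrS b) mT Q (tgt Q k).
Definition bS b := mS Q b.
Definition vT a := \sum_(k <- arrT a) uS Q (src Q k).
Definition vS b := \sum_(k <- arrS b) uT Q (tgt Q k).

(* column offset of page k inside A_{t(h_k)}; row offset inside A_{s(h_k)} *)
Definition colOff (k : 'I_(nr Q)) : nat :=
  \sum_(k' <- arrT (tgt Q k) | k' < k) mS Q (src Q k').
Definition rowOff (k : 'I_(nr Q)) : nat :=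
  \sum_(k' <- arrS (src Q k) | k' < k) mT Q (tgt Q k').

Definition inL (x : Lpt Q) : bool :=
  (0 < x.1.1 <= mT Q (tgt Q x.2)) && (0 < x.1.2 <= mS Q (src Q x.2)).

(* psiT x = phi_{t(h_k)}^{-1}(x), psiS x = phi_{s(h_k)}^{-1}(x) *)
Definition psiT (x : Lpt Q) : pos := (x.1.1, colOff x.2 + x.1.2).
Definition psiS (x : Lpt Q) : pos := (rowOff x.2 + x.1.1, x.1.2).

Definition standing : Prop :=
  (forall a, 0 < uT Q a <= minn (aT a) (bT a) /\ uT Q a <= vT a) /\
  (forall b, 0 < uS Q b <= minn (aS b) (bS b) /\ uS Q b <= vS b).

Variable H : 'I_(nT Q) -> nat -> seq pos.
Variable V : 'I_(nS Q) -> nat -> seq pos.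

Definition road_map : Prop :=
  (forall a p, 0 < p <= uT Q a ->
     lattice_path_def (aT a) (bT a) (aT a - uT Q a + p, 1) (p, bT a) (H a p)) /\
  (forall a p p', 0 < p -> p < p' -> p' <= uT Q a ->
     ~~ has (fun x => x \in H a p') (H a p)) /\
  (forall b q, 0 < q <= uS Q b ->
     lattice_path_def (aS b) (bS b) (aS b, q) (1, bS b - uS Q b + q) (V b q)) /\
  (forall b q q', 0 < q -> q < q' -> q' <= uS Q b ->
     ~~ has (fun x => x \in V b q') (V b q)).

Definition straight : Prop :=
  (forall a p R, 0 < p <= uT Q a -> corner R (H a p) ->
     exists x : Lpt Q, [/\ inL x, tgt Q x.2 = a, psiT x = R &
       exists q, 0 < q <= uS Q (src Q x.2) /\ psiS x \in V (src Q x.2) q]) /\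
  (forall b q R, 0 < q <= uS Q b -> corner R (V b q) ->
     exists x : Lpt Q, [/\ inL x, src Q x.2 = b, psiS x = R &
       exists p, 0 < p <= uT Q (tgt Q x.2) /\ psiT x \in H (tgt Q x.2) p]).

Definition inC (x : Lpt Q) : Prop :=
  inL x /\
  (exists p, 0 < p <= uT Q (tgt Q x.2) /\ psiT x \in H (tgt Q x.2) p) /\
  (exists q, 0 < q <= uS Q (src Q x.2) /\ psiS x \in V (src Q x.2) q).

(* restriction of a path of A_{s(h_k)} to page k, transported into A_{t(h_k)} *)
Definition VtoT (k : 'I_(nr Q)) (P : seq pos) : seq pos :=
  [seq (x.1 - rowOff k, colOff k + x.2) |
     x <- P & rowOff k < x.1 <= rowOff k + mT Q (tgt Q k)].
(* restriction of a path of A_{t(h_k)} to page k, transported into A_{s(h_k)} *)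
Definition HtoS (k : 'I_(nr Q)) (P : seq pos) : seq pos :=
  [seq (rowOff k + x.1, x.2 - colOff k) |
     x <- P & colOff k < x.2 <= colOff k + mS Q (src Q k)].

Definition VTs (a : 'I_(nT Q)) : seq (seq pos) :=
  flatten [seq [seq VtoT k (V (src Q k) q) | q <- iota 1 (uS Q (src Q k))] | k <- arrT a].
Definition VT (a : 'I_(nT Q)) (q : nat) : seq pos := nth [::] (VTs a) q.-1.
Definition HSs (b : 'I_(nS Q)) : seq (seq pos) :=
  flatten [seq [seq HtoS k (H (tgt Q k) p) | p <- iota 1 (uT Q (tgt Q k))] | k <- arrS b].
Definition HS (b : 'I_(nS Q)) (p : nat) : seq pos := nth [::] (HSs b) p.-1.

(* P^alpha_{pq}, Q^alpha_{pq}: SW / NE endpoints of H^alpha_p \cap V^alpha_q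
   (first / last common point along H^alpha_p, listed from SW to NE) *)
Definition PT a p q : pos := head (0, 0) [seq x <- H a p | x \in VT a q].
Definition QT a p q : pos := last (0, 0) [seq x <- H a p | x \in VT a q].
(* P^beta_{pq}, Q^beta_{pq}: SW / NE endpoints of H^beta_p \cap V^beta_q
   (first / last common point along V^beta_q, listed from SW to NE) *)
Definition PS b p q : pos := head (0, 0) [seq x <- V b q | x \in HS b p].
Definition QS b p q : pos := last (0, 0) [seq x <- V b q | x \in HS b p].

Definition has_hNW (a : 'I_(nT Q)) (S : seq pos) : Prop :=
  exists R p'', [/\ R \in S, 0 < p'' <= uT Q a, nw_corner R (H a p'') &
    exists x : Lpt Q, [/\ inC x, tgt Q x.2 = a & psiT x = R]].
Definition has_vNW (b : 'I_(nS Q)) (S : seq pos) : Prop :=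
  exists R q'', [/\ R \in S, 0 < q'' <= uS Q b, nw_corner R (V b q'') &
    exists x : Lpt Q, [/\ inC x, src Q x.2 = b & psiS x = R]].

End Defs.

(* Main.v *)
Require Import Defs.
From mathcomp Require Import all_boot.
From mathcomp Require Import zify.
Set Implicit Arguments.
Unset Strict Implicit.
Unset Printing Implicit Defensive.

Definition le2 (x y : pos) : bool := (y.1 <= x.1) && (x.2 <= y.2).

Lemma le2_refl : reflexive le2.
Proof. by move=> x; rewrite /le2 !leqnn. Qed.

Lemma le2_trans : transitive le2.
Proof. move=> y x z /andP[h1 h2] /andP[h3 h4]; apply/andP; lia. Qed.

Lemma lstep_le2 x y : lstep x y -> le2 x y.
Proof. rewrite /lstep /le2 => /orP[/andP[/eqP-> /eqP->]|/andP[/eqP h /eqP->]]; apply/andP; lia. Qed.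

Lemma lstep_cases x y : lstep x y -> y = (x.1, x.2.+1) \/ (y = (x.1.-1, x.2) /\ 0 < x.1).
Proof.
case: x y => [a b] [c d]; rewrite /lstep /= => /orP[/andP[/eqP-> /eqP->]|/andP[/eqP h /eqP->]].
  by left.
by right; split; [congr pair; lia | lia].
Qed.

Lemma sorted_le2 s : sorted lstep s -> pairwise le2 s.
Proof.
move=> h; rewrite -(sorted_pairwise le2_trans).
exact: (sub_sorted lstep_le2).
Qed.

Definition lt2 (x y : pos) : bool := (y.1 <= x.1) && (x.2 <= y.2) && (y.1 + x.2 < x.1 + y.2).

Lemma sorted_uniq_pos s : sorted lstep s -> uniq s.
Proof.
move=> h.
have tr : transitive lt2 by move=> y x z /andP[/andP[h1 h2] h3] /andP[/andP[h4 h5] h6]; apply/andP; split; [apply/andP|]; lia.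
have ir : irreflexive lt2 by move=> x; rewrite /lt2; apply/negbTE; lia.
apply: (sorted_uniq tr ir).
apply: (sub_sorted _ h) => x y.
rewrite /lstep /lt2 => /orP[/andP[/eqP-> /eqP->]|/andP[/eqP h1 /eqP->]]; apply/andP; split; try apply/andP; lia.
Qed.

Lemma pw_cmp (s : seq pos) (x y : pos) : pairwise le2 s -> x \in s -> y \in s -> le2 x y || le2 y x.
Proof.
elim: s => // a s IH /= /andP[ha hs]; rewrite !inE => /orP[/eqP->|hx] /orP[/eqP->|hy].
- by rewrite le2_refl.
- by rewrite (allP ha _ hy).
- by rewrite (allP ha _ hx) orbT.
- exact: IH.
Qed.

Lemma pw_last (s : seq pos) (d y : pos) : pairwise le2 s -> y \in s -> le2 y (last d s).
Proof.
elim: s d => // a s IH d /andP[ha hs]; rewrite inE => /orP[/eqP->|hy] /=.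
  case: s {IH hs} ha => [|b s] hb; first by rewrite le2_refl.
  apply: (allP hb); simpl; exact: mem_last.
exact: IH.
Qed.

Lemma pw_head (s : seq pos) (d y : pos) : pairwise le2 s -> y \in s -> le2 (head d s) y.
Proof.
case: s => // a s /= /andP[ha hs]; rewrite inE => /orP[/eqP->|hy]; first exact: le2_refl.
exact: (allP ha).
Qed.

Lemma row_cover (x : pos) (s : seq pos) i : sorted lstep (x :: s) -> (last x s).1 <= i <= x.1 ->
  exists2 y : pos, y \in x :: s & y.1 = i.
Proof.
elim: s x => [|x' s IH] x /=.
  by move=> _ h; exists x; [rewrite inE|lia].
move=> /andP[hs hp] hi.
case: (eqVneq i x.1) => [->|ne]; first by exists x; rewrite ?inE ?eqxx.
have hx' : i <= x'.1.
  by case: (lstep_cases hs) => [->|[-> h0]] /=; lia.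
have [y hy hy2] := IH x' hp ltac:(lia).
by exists y => //; rewrite inE hy orbT.
Qed.

Lemma col_cover (x : pos) (s : seq pos) j : sorted lstep (x :: s) -> x.2 <= j <= (last x s).2 ->
  exists2 y : pos, y \in x :: s & y.2 = j.
Proof.
elim: s x => [|x' s IH] x /=.
  by move=> _ h; exists x; [rewrite inE|lia].
move=> /andP[hs hp] hi.
case: (eqVneq j x.2) => [->|ne]; first by exists x; rewrite ?inE ?eqxx.
have hx' : x'.2 <= j.
  by case: (lstep_cases hs) => [->|[-> h0]] /=; lia.
have [y hy hy2] := IH x' hp ltac:(lia).
by exists y => //; rewrite inE hy orbT.
Qed.

Lemma sorted_cons_inv (a : pos) (s : seq pos) : sorted lstep (a :: s) -> sorted lstep s.
Proof. by case: s => //= b s /andP[]. Qed.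

Lemma head_le2 (a : pos) (s : seq pos) (y : pos) : sorted lstep (a :: s) -> y \in s -> le2 a y.
Proof. by move=> /sorted_le2 /= /andP[/allP h _] /h. Qed.

Lemma head_le2' (a : pos) (s : seq pos) (y : pos) : sorted lstep (a :: s) -> y \in a :: s -> le2 a y.
Proof. by move=> h; rewrite inE => /orP[/eqP->|/(head_le2 h)//]; exact: le2_refl. Qed.

Lemma row_contig (s : seq pos) (y z : pos) j : sorted lstep s -> y \in s -> z \in s -> y.1 = z.1 ->
  y.2 <= j <= z.2 -> (y.1, j) \in s.
Proof.
elim: s y z => // a s IH y z hs; rewrite !inE => /orP[/eqP ey|hy] /orP[/eqP ez|hz] e hj.
- subst; move/andP: hj => [h1 h2]; have -> : j = a.2 by lia.
  by rewrite -surjective_pairing eqxx.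
- subst y; case: (eqVneq j a.2) => [->|ne]; first by rewrite -surjective_pairing eqxx.
  case: s IH hs hz => // b s IH /= /andP[hab hs] hz.
  have hbz := head_le2' hs hz.
  case: (lstep_cases hab) => [eb|[eb h0]].
    have := IH b z hs; rewrite inE eqxx => /(_ isT hz); rewrite eb /= => /(_ e).
    by move=> h; rewrite h ?orbT //; lia.
  by exfalso; move: hbz; rewrite /le2 eb /=; lia.
- subst z; have := head_le2 hs hy; rewrite /le2 => /andP[h1 h2].
  have -> : j = y.2 by lia.
  by rewrite -surjective_pairing hy orbT.
- by rewrite (IH y z (sorted_cons_inv hs)) ?orbT.
Qed.

Lemma col_contig (s : seq pos) (y z : pos) i : sorted lstep s -> y \in s -> z \in s -> y.2 = z.2 ->
  z.1 <= i <= y.1 -> (i, y.2) \in s.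
Proof.
elim: s y z => // a s IH y z hs; rewrite !inE => /orP[/eqP ey|hy] /orP[/eqP ez|hz] e hj.
- subst; move/andP: hj => [h1 h2]; have -> : i = a.1 by lia.
  by rewrite -surjective_pairing eqxx.
- subst y; case: (eqVneq i a.1) => [->|ne]; first by rewrite -surjective_pairing eqxx.
  case: s IH hs hz => // b s IH /= /andP[hab hs] hz.
  have hbz := head_le2' hs hz.
  case: (lstep_cases hab) => [eb|[eb h0]].
    by exfalso; move: hbz; rewrite /le2 eb /=; lia.
  have := IH b z hs; rewrite inE eqxx => /(_ isT hz); rewrite eb /= => /(_ e).
  by move=> h; rewrite h ?orbT //; lia.
- subst z; have := head_le2 hs hy; rewrite /le2 => /andP[h1 h2].
  have -> : i = y.1 by lia.
  by rewrite -surjective_pairing hy orbT.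
- by rewrite (IH y z (sorted_cons_inv hs)) ?orbT.
Qed.

Lemma row_entry (x : pos) (s : seq pos) r : sorted lstep (x :: s) -> (last x s).1 <= r < x.1 ->
  exists2 z : pos, z \in x :: s & (z.1 = r) /\ ((r.+1, z.2) \in x :: s).
Proof.
elim: s x => [|x' s IH] x /=; first by lia.
move=> /andP[hs hp] hr.
case: (lstep_cases hs) => [ex|[ex h0]].
  have e1 : x'.1 = x.1 by rewrite ex.
  have [z hz [h1 h2]] := IH x' hp ltac:(lia).
  by exists z; [rewrite in_cons hz orbT | split=> //; rewrite in_cons h2 orbT].
case: (eqVneq x'.1 r) => [e|ne].
  exists x'; first by rewrite !inE eqxx orbT.
  split=> //; rewrite inE; apply/orP; left; apply/eqP.
  by rewrite ex /= [RHS]surjective_pairing; move: e; rewrite ex /= => e; congr pair; lia.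
have e1 : x'.1 = x.1.-1 by rewrite ex.
have [z hz [h1 h2]] := IH x' hp ltac:(move: ne; rewrite e1; lia).
by exists z; [rewrite in_cons hz orbT | split=> //; rewrite in_cons h2 orbT].
Qed.

Lemma col_entry (x : pos) (s : seq pos) j (y : pos) : sorted lstep (x :: s) -> x.2 < j -> y \in x :: s -> y.2 = j ->
  exists2 e : pos, e \in x :: s & [/\ e.2 = j, (e.1, j.-1) \in x :: s & y.1 <= e.1].
Proof.
elim: s x => [|x' s IH] x /=.
  by move=> _ hj; rewrite inE => /eqP->; lia.
move=> /andP[hs hp] hj; rewrite inE => /orP[/eqP->|hy] hyj; first by lia.
case: (eqVneq x'.2 j) => [e|ne].
  exists x'; first by rewrite !inE eqxx orbT.
  have hxy' : le2 x' y.
    by move: hy; rewrite inE => /orP[/eqP->|h]; [exact: le2_refl| exact: (head_le2 hp h)].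
  case: (lstep_cases hs) => [ex|[ex h0]]; last by move: e; rewrite ex /=; lia.
  split=> //; last by move: hxy'; rewrite /le2 => /andP[].
  rewrite inE; apply/orP; left; apply/eqP; rewrite ex /= -e ex /=.
  by rewrite -surjective_pairing.
have hj' : x'.2 < j.
  case: (lstep_cases hs) => [ex|[ex h0]]; move: ne; rewrite ex /=; lia.
have [e he [h1 h2 h3]] := IH x' hp hj' hy hyj.
by exists e; [rewrite in_cons he orbT | split=> //; rewrite in_cons h2 orbT].
Qed.

Lemma succ_ex (s : seq pos) (y z : pos) : sorted lstep s -> y \in s -> z \in s -> z.1 < y.1 ->
  exists2 y' : pos, lstep y y' & y' \in s.
Proof.
elim: s => // a s IH hs; rewrite !inE => /orP[/eqP ey|hy] /orP[/eqP ez|hz] hzy.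
- by subst; lia.
- subst y; case: s IH hs hz => // b s _ /= /andP[hab _] _.
  by exists b => //; rewrite !inE eqxx orbT.
- subst z; have := head_le2 hs hy; rewrite /le2 => /andP[h1 _]; lia.
- have [y' h1 h2] := IH (sorted_cons_inv hs) hy hz hzy.
  by exists y' => //; rewrite inE h2 orbT.
Qed.

Lemma vrun (x : pos) (s : seq pos) (z : pos) : sorted lstep (x :: s) -> z \in x :: s -> (z.1.+1, z.2) \in x :: s ->
  x.2 < z.2 -> exists R : pos, [/\ R.2 = z.2, z.1 < R.1 & se_corner R (x :: s)].
Proof.
elim: s x => [|x' s IH] x /=.
  by move=> _; rewrite inE => /eqP->; lia.
move=> /andP[hs hp]; rewrite inE => /orP[/eqP->|hz]; first by lia.
rewrite inE => /orP[/eqP e|hzs] hxz.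
  by exfalso; move: hxz; rewrite -e /=; lia.
case: (ltnP x'.2 z.2) => hx'z.
  have [R [h1 h2 h3]] := IH x' hp hz hzs hx'z.
  exists R; split=> //; rewrite /se_corner infix_consl; apply/orP; right; exact: h3.
have ex : x' = (x.1, x.2.+1).
  by case: (lstep_cases hs) => [//|[ex _]]; move: hx'z hxz; rewrite ex /=; lia.
have ez2 : z.2 = x.2.+1 by move: hx'z; rewrite ex /=; lia.
have hzs' : le2 x' (z.1.+1, z.2).
  by move: hzs; rewrite inE => /orP[/eqP<-|h]; [exact: le2_refl|exact: head_le2 hp h].
have hzx' : z != x'.
  by apply/eqP=> e; move: hzs'; rewrite /le2 -e /=; lia.
case: s IH hp hz hzs => [|x'' s] _ hp; first by rewrite !inE (negbTE hzx').
rewrite inE (negbTE hzx') /= => hz _.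
move: hp => /= /andP[hs' hp].
have hx''z := head_le2 (hp : sorted lstep (x'' :: s)).
have ex'' : x'' = (x'.1.-1, x'.2) /\ 0 < x'.1.
  case: (lstep_cases hs') => [e|//].
  exfalso; move: hz; rewrite inE => /orP[/eqP e'|h].
    by move: e'; rewrite e => e'; move: ez2; rewrite e' ex /=; lia.
  by have := hx''z _ h; rewrite /le2 e ex /=; lia.
case: ex'' => ex'' h0.
exists x'; split.
- by rewrite ex ez2.
- by move: hzs'; rewrite /le2 /=; lia.
- rewrite /se_corner infix_consl; apply/orP; left.
  by rewrite ex'' ex /= -surjective_pairing !eqxx /=; case: (s).
Qed.

Lemma above (x0 y0 : pos) (A B : seq pos) :
  sorted lstep (x0 :: A) -> sorted lstep (y0 :: B) -> x0.2 = y0.2 -> x0.1 < y0.1 ->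
  (forall z, z \in x0 :: A -> z \in y0 :: B -> False) ->
  forall x y : pos, x \in x0 :: A -> y \in y0 :: B -> x.2 = y.2 -> x.1 < y.1.
Proof.
move=> hA hB ec er dis.
have base : forall x y : pos, x \in x0 :: A -> y \in y0 :: B -> x.2 = y.2 -> x.2 <= x0.2 -> y.1 <= x.1 -> False.
  move=> x y hx hy e hj hle; have := head_le2' hA hx; rewrite /le2 => /andP[h1 h2].
  have ey0 : y0.2 = y.2 by lia.
  have hin := col_contig hB (mem_head _ _) hy ey0 (i := x0.1) ltac:(apply/andP; split; lia).
  by apply: (dis x0); [exact: mem_head| rewrite [x0]surjective_pairing ec; exact: hin].
move=> x y hx hy e; rewrite ltnNge; apply/negP => hle.
suff : forall j (x y : pos), x \in x0 :: A -> y \in y0 :: B -> x.2 = j -> y.2 = j -> y.1 <= x.1 -> False.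
  by move/(_ x.2 x y hx hy erefl (esym e) hle).
elim=> [|j IH] {hx hy e hle}x {}y hx hy ex ey hle.
  by apply: (base x y) => //; lia.
case: (leqP j.+1 x0.2) => hj.
  by apply: (base x y) => //; lia.
have [ea hea [ea2 hwa hea1]] := col_entry hA hj hx ex.
have [eb heb [eb2 hwb heb1]] := col_entry hB (ltac:(rewrite -ec; exact hj)) hy ey.
case: (leqP eb.1 ea.1) => hab.
  by apply: (IH (ea.1, j) (eb.1, j) hwa hwb erefl erefl hab).
have hin := col_contig hB heb hy (etrans eb2 (esym ey)) (i := ea.1) ltac:(apply/andP; split; lia).
apply: (dis ea hea); rewrite [ea]surjective_pairing ea2 -eb2; exact: hin.
Qed.


Lemma mem_last_nonempty (d : pos) (s : seq pos) : s != [::] -> last d s \in s.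
Proof. by case: s => // a s _ /=; exact: mem_last. Qed.

Lemma mem_head_nonempty (d : pos) (s : seq pos) : s != [::] -> head d s \in s.
Proof. by case: s => // a s _; exact: mem_head. Qed.

Lemma last_row (s : seq pos) (w : pos) p : pairwise le2 s -> w \in s -> w.1 = p ->
  (forall y : pos, y \in s -> p <= y.1) -> (last (0, 0) s).1 = p.
Proof.
move=> hs hw ew hb.
have hne : s != [::] by apply/eqP => e; rewrite e in hw.
have := hb _ (mem_last_nonempty (0, 0) hne); have := pw_last (0, 0) hs hw.
by rewrite /le2 => /andP[h1 h2] h3; rewrite /pos in h1 h2 h3 *; lia.
Qed.

Section Abstract.
Variables (A B u : nat) (H : nat -> seq pos) (Ws : seq (seq pos)).
Local Notation v := (size Ws).
Local Notation W q := (nth [::] Ws q.-1).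
Hypothesis uv : u <= v.
Hypothesis Hp : forall p, 0 < p <= u -> lattice_path_def A B (A - u + p, 1) (p, B) (H p).
Hypothesis Hd : forall p p', 0 < p -> p < p' -> p' <= u -> ~~ has (fun x => x \in H p') (H p).
Hypothesis Wp : forall w, w \in Ws -> sorted lstep w.
Hypothesis Wr : forall w, w \in Ws -> forall i, 0 < i <= A -> exists2 y : pos, y \in w & y.1 = i.
Hypothesis Wc : forall w, w \in Ws -> forall y : pos, y \in w -> 0 < y.2 <= B.
Hypothesis Wo : pairwise (fun w w' : seq pos => all (fun y : pos => all (fun z : pos => (y.1 == z.1) ==> (y.2 < z.2)) w') w) Ws.
Hypothesis Hs : forall p (R : pos), 0 < p <= u -> se_corner R (H p) -> has (fun w => R \in w) Ws.

Local Ltac slia := repeat match goal with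
 | h : forall _, _ |- _ => clear h
 | h : is_true (_ \in _) |- _ => clear h
 | h : is_true (sorted _ _) |- _ => clear h
 | h : is_true (path _ _ _) |- _ => clear h
 | h : is_true (se_corner _ _) |- _ => clear h
 | h : is_true (nw_corner _ _) |- _ => clear h
 | h : is_true (lstep _ _) |- _ => clear h
 | h : is_true (all _ _) |- _ => clear h
 | h : is_true (le2 _ _) |- _ => clear h
 | h : is_true (pairwise _ _) |- _ => clear h
 | h : is_true (_ != [::]) |- _ => clear h
 | h : @eq (seq _) _ _ |- _ => clear h
 | h : @eq (prod _ _) _ _ |- _ => clear h
 end; try (unfold pos in * ); lia.

Lemma Hdecomp p : 0 < p <= u -> exists s, [/\ H p = (A - u + p, 1) :: s,
  sorted lstep ((A - u + p, 1) :: s), last (A - u + p, 1) s = (p, B) & all (inbox A B) (H p)].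
Proof.
move=> hp; have := Hp hp; rewrite /lattice_path_def.
case e: (H p) => [|x s] //= /and4P[/eqP ex hs /eqP hl hb].
by exists s; subst x; split.
Qed.

Lemma Hsrt p : 0 < p <= u -> sorted lstep (H p).
Proof. by move=> hp; have [s [-> h _ _]] := Hdecomp hp. Qed.

Lemma Hlast p : 0 < p <= u -> (p, B) \in H p.
Proof. by move=> hp; have [s [-> h <- _]] := Hdecomp hp; exact: mem_last. Qed.

Lemma Hhead p : 0 < p <= u -> (A - u + p, 1) \in H p.
Proof. by move=> hp; have [s [-> h _ _]] := Hdecomp hp; exact: mem_head. Qed.

Lemma Hbox p (y : pos) : 0 < p <= u -> y \in H p ->
  [/\ p <= y.1, y.1 <= A, 0 < y.2 & y.2 <= B].
Proof.
move=> hp hy; have [s [e hs hl hb]] := Hdecomp hp.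
have := allP hb _ hy; rewrite /inbox => /andP[/andP[_ hA] _].
rewrite e in hy.
have h1 := pw_head (A - u + p, 1) (sorted_le2 hs) hy.
have h2 := pw_last (A - u + p, 1) (sorted_le2 hs) hy.
move: h1 h2; rewrite /= hl /le2 /= => /andP[a1 a2] /andP[a3 a4]; split=> //; slia.
Qed.

Lemma Hrow_le p (y : pos) : 0 < p <= u -> y \in H p -> y.1 <= A - u + p.
Proof.
move=> hp hy; have [s [e hs hl hb]] := Hdecomp hp.
rewrite e in hy.
by have := pw_head (A - u + p, 1) (sorted_le2 hs) hy; rewrite /le2 /= => /andP[].
Qed.

Lemma Hdis p p' (y : pos) : 0 < p <= u -> 0 < p' <= u -> p != p' -> y \in H p -> y \in H p' -> False.
Proof.
move=> hp hp' ne hy hy'; case: (ltngtP p p') ne => // [lt|lt] _.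
  by move: (Hd (p:=p) (p':=p') ltac:(slia) lt ltac:(slia)) => /hasP; apply; exists y.
by move: (Hd (p:=p') (p':=p) ltac:(slia) lt ltac:(slia)) => /hasP; apply; exists y.
Qed.

Lemma Habove p (x y : pos) : 0 < p -> p < u -> x \in H p -> y \in H p.+1 -> x.2 = y.2 -> x.1 < y.1.
Proof.
move=> p0 pu hx hy e.
have [s [es hs _ _]] := Hdecomp (p := p) ltac:(slia).
have [t [et ht _ _]] := Hdecomp (p := p.+1) ltac:(slia).
have dis : forall z, z \in (A - u + p, 1) :: s -> z \in (A - u + p.+1, 1) :: t -> False.
  move=> z; rewrite -es -et => h1 h2.
  by apply: (Hdis (p := p) (p' := p.+1) (y := z) ltac:(slia) ltac:(slia) ltac:(by rewrite neq_ltn ltnSn) h1 h2).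
have er : (A - u + p, 1).1 < (A - u + p.+1, 1).1 by rewrite /=; slia.
rewrite es in hx; rewrite et in hy.
exact: (above hs ht erefl er dis hx hy e).
Qed.

Lemma Wmem q : 0 < q <= v -> W q \in Ws.
Proof. by case: q => // q /andP[_ h]; apply: mem_nth. Qed.

Lemma Word q q' (y z : pos) : 0 < q -> q < q' -> q' <= v -> y \in W q -> z \in W q' -> y.1 = z.1 -> y.2 < z.2.
Proof.
move=> q0 qq q'v hy hz e.
have := (pairwiseP [::] Wo) q.-1 q'.-1; rewrite !inE => /(_ ltac:(slia) ltac:(slia) ltac:(slia)).
by move=> /allP/(_ y hy)/allP/(_ z hz); rewrite e eqxx.
Qed.

Lemma Wcmp q (y z : pos) : 0 < q <= v -> y \in W q -> z \in W q -> le2 y z || le2 z y.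
Proof. by move=> hq; apply: pw_cmp; apply: sorted_le2; apply: Wp; apply: Wmem. Qed.

Lemma Hcmp p (y z : pos) : 0 < p <= u -> y \in H p -> z \in H p -> le2 y z || le2 z y.
Proof. by move=> hp; apply: pw_cmp; apply: sorted_le2; apply: Hsrt. Qed.

Lemma Hs' p (R : pos) : 0 < p <= u -> se_corner R (H p) -> exists2 q, 0 < q <= v & R \in W q.
Proof.
move=> hp /(Hs hp) /hasP[w hw hR].
exists (index w Ws).+1; first by rewrite /= index_mem hw.
by rewrite /= nth_index.
Qed.

Lemma no_low p : 0 < p <= u -> forall q, p + (v - u) < q <= v ->
  forall x : pos, x \in H p -> x \in W q -> x.1 <= p.
Proof.
suff : forall k p, u - p = k -> 0 < p <= u -> forall q, p + (v - u) < q <= v ->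
  forall x : pos, x \in H p -> x \in W q -> x.1 <= p by move=> h hp; apply: (h (u - p)).
elim=> [|k IH] {}p ek hp q hq x hx hxq.
  by exfalso; slia.
rewrite leqNgt; apply/negP => hr.
have pu : p < u by slia.
have hp1 : 0 < p.+1 <= u by slia.
have [b1 b2 b3 b4] := Hbox hp hx.
have [y hy ey] : exists2 y : pos, y \in H p.+1 & y.2 = x.2.
  have [s [es hs hl _]] := Hdecomp (p := p.+1) ltac:(slia).
  rewrite es; apply: col_cover => //; rewrite hl /=; clear -b3 b4; slia.
have hxy := Habove (p := p) ltac:(slia) pu hx hy (esym ey).
have [s [es hs hl _]] := Hdecomp (p := p.+1) ltac:(slia).
have [c1 c5 c3 c4] := Hbox hp1 hy.
have c2 := Hrow_le hp1 hy.
have [z hz [ez1 ez2]] := row_entry (r := x.1) hs ltac:(rewrite hl /=; clear -c2 hxy hr; slia).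
clear c2.
rewrite -es in hz ez2.
have hxz : x.2 < z.2.
  have := Hcmp (p := p.+1) ltac:(slia) hy hz; rewrite /le2 => /orP[/andP[h1 h2]|/andP[h1 h2]]; last by slia.
  rewrite ltn_neqAle -ey h2 andbT; apply/eqP => e.
  apply: (Hdis (p := p) (p' := p.+1) (y := x) ltac:(slia) ltac:(slia) ltac:(by rewrite neq_ltn ltnSn) hx).
  have -> : x = z by rewrite [x]surjective_pairing [z]surjective_pairing ez1 -ey e.
  exact: hz.
have [R [eR2 hR1 hcR]] := vrun (z := z) hs (ltac:(by rewrite -es)) (ltac:(by rewrite -es ez1)) ltac:(rewrite /=; slia).
rewrite -es in hcR.
clear hs hl es.
have hRin : R \in H p.+1 by apply: (mem_infix hcR); rewrite !inE eqxx !orbT.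
have [d1 d2 d3 d4] := Hbox hp1 hRin.
have [q' hq' hRq'] := Hs' hp1 hcR.
case: (leqP q' q) => hqq.
  have hq0 : 0 < q <= v by slia.
  have [w0 hw0 ew0] := Wr (Wmem hq0) (i := R.1) ltac:(slia).
  have hw0x : w0.2 <= x.2.
    by have := Wcmp hq0 hw0 hxq; rewrite /le2 => /orP[/andP[h1 h2]|/andP[h1 h2]]; slia.
  case: (eqVneq q' q) => eqq.
    subst q'; have := Wcmp hq0 hRq' hxq; rewrite /le2 => /orP[/andP[h1 h2]|/andP[h1 h2]]; slia.
  have := Word (q := q') (q' := q) ltac:(slia) ltac:(slia) ltac:(slia) hRq' hw0 (esym ew0); slia.
have := IH p.+1 ltac:(slia) ltac:(slia) q' ltac:(slia) R hRin hRq'; slia.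
Qed.

Lemma rowp_hit p q : 0 < p <= u -> p + (v - u) <= q <= v ->
  exists2 w : pos, w \in W q & (w.1 = p /\ w \in H p).
Proof.
move=> hp hq.
have hq0 : 0 < q <= v by slia.
have [s [es hs hl hb]] := Hdecomp hp.
have [z0 hz0 [ez1 ez2]] : exists2 z0 : pos, z0 \in H p & (z0.1 = p /\ (z0.2 = 1 \/ (p.+1, z0.2) \in H p)).
  case: (eqVneq (A - u + p) p) => ea.
    by exists (A - u + p, 1); [exact: Hhead|split=> //; left].
  have [z hz [h1 h2]] := row_entry (r := p) hs ltac:(rewrite hl /=; clear -ea; slia).
  by exists z; rewrite es //; split=> //; right.
have pA : p <= A.
  by have := allP hb _ (Hlast hp); rewrite /inbox /= => /andP[/andP[_ ?] _].
have [w [hw ew1 ew2]] : exists w : pos, [/\ w \in W q, w.1 = p & z0.2 <= w.2].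
  case: ez2 => [e1|hs0].
    have [w hw ew] := Wr (Wmem hq0) (i := p) ltac:(slia).
    by exists w; split=> //; rewrite e1; have := Wc (Wmem hq0) hw; slia.
  case: (eqVneq z0.2 1) => e1.
    have [w hw ew] := Wr (Wmem hq0) (i := p) ltac:(slia).
    by exists w; split=> //; rewrite e1; have := Wc (Wmem hq0) hw; slia.
  have [R [eR2 hR1 hcR]] := vrun (z := z0) hs (ltac:(by rewrite -es)) (ltac:(by rewrite -es ez1)) ltac:(rewrite /=; have [_ _ ? _] := Hbox hp hz0; move: e1 => /eqP e1; slia).
  rewrite -es in hcR.
  have hRin : R \in H p by apply: (mem_infix hcR); rewrite !inE eqxx !orbT.
  have [q' hq' hRq'] := Hs' hp hcR.
  have hq'd : q' <= p + (v - u).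
    rewrite leqNgt; apply/negP => h.
    have := no_low hp (q := q') ltac:(slia) hRin hRq'; slia.
  have [w' hw' ew'] := Wr (Wmem hq') (i := p) ltac:(slia).
  have hRw' : R.2 <= w'.2.
    by have := Wcmp hq' hRq' hw'; rewrite /le2 => /orP[/andP[h1 h2]|/andP[h1 h2]]; slia.
  case: (eqVneq q' q) => eqq.
    by subst q'; exists w'; split=> //; slia.
  have [w hw ew] := Wr (Wmem hq0) (i := p) ltac:(slia).
  have := Word (q := q') (q' := q) ltac:(slia) ltac:(slia) ltac:(slia) hw' hw (etrans ew' (esym ew)).
  by exists w; split=> //; slia.
exists w => //; split=> //.
have hwB := Wc (Wmem hq0) hw.
have := row_contig (Hsrt hp) hz0 (Hlast hp) (j := w.2) ez1 ltac:(rewrite /=; slia).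
by rewrite ez1 -ew1 -surjective_pairing.
Qed.

Definition Pf p q := head (0, 0) [seq x <- H p | x \in W q].
Definition Qf p q := last (0, 0) [seq x <- H p | x \in W q].

Lemma filt_pw p q : 0 < p <= u -> pairwise le2 [seq x <- H p | x \in W q].
Proof. by move=> hp; apply: pairwise_filter; apply: sorted_le2; apply: Hsrt. Qed.

Lemma Q_row p q : 0 < p <= u -> p + (v - u) <= q <= v -> (Qf p q).1 = p.
Proof.
move=> hp hq; have [w hw [ew1 ew2]] := rowp_hit hp hq.
have hwf : w \in [seq x <- H p | x \in W q] by rewrite mem_filter hw ew2.
apply: (last_row (w := w) (filt_pw q hp) hwf ew1).
by move=> y; rewrite mem_filter => /andP[_ /(Hbox hp)[]].
Qed.

Lemma Q_in p q : 0 < p <= u -> p + (v - u) <= q <= v -> Qf p q \in H p /\ Qf p q \in W q.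
Proof.
move=> hp hq; have [w hw [ew1 ew2]] := rowp_hit hp hq.
have hwf : w \in [seq x <- H p | x \in W q] by rewrite mem_filter hw ew2.
have hne : [seq x <- H p | x \in W q] != [::] by apply/eqP => e; rewrite e in hwf.
by have := mem_last_nonempty (0, 0) hne; rewrite mem_filter => /andP[].
Qed.

Lemma P_main p q : 0 < p -> p.+1 + (v - u) <= q <= v ->
  [/\ (Pf p q).1 = p, ((Pf p q).1.+1, (Pf p q).2) = Qf p.+1 q &
   forall R : pos, R \in H p -> R.1 = p -> (Pf p q).2 <= R.2 ->
     forall p'', 0 < p'' <= u -> ~~ nw_corner R (H p'')].
Proof.
move=> p0 hq.
have pu : p < u by slia.
have hp : 0 < p <= u by slia.
have hp1 : 0 < p.+1 <= u by slia.
have hq0 : 0 < q <= v by slia.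
have [hQ1H hQ1W] := Q_in hp1 (q := q) ltac:(slia).
have eQ1 := Q_row hp1 (q := q) ltac:(slia).
set Q1 := Qf p.+1 q in hQ1H hQ1W eQ1 *.
have [d1 d2 d3 d4] := Hbox hp1 hQ1H.
have [w hw ew] := Wr (Wmem hq0) (i := p) ltac:(slia).
have [y' hst hy'] := succ_ex (Wp (Wmem hq0)) hQ1W hw ltac:(slia).
have ey' : y' = (p, Q1.2).
  case: (lstep_cases hst) => [e|[e _]]; last by rewrite e eQ1.
  exfalso.
  have hy'H : y' \in H p.+1.
    have := row_contig (Hsrt hp1) hQ1H (Hlast hp1) (j := Q1.2.+1) ltac:(by rewrite eQ1).
    rewrite e eQ1 /=; apply; have := Wc (Wmem hq0) hy'; rewrite e /=; slia.
  have hf : y' \in [seq x <- H p.+1 | x \in W q] by rewrite mem_filter hy'H hy'.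
  have := pw_last (0, 0) (filt_pw q hp1) hf; rewrite -/(Qf _ _) -/Q1 /le2 e /=; slia.
rewrite ey' in hy'.
have hpc : (p, Q1.2) \in H p.
  have [s [es hs hl _]] := Hdecomp hp.
  have [h hh eh] : exists2 h : pos, h \in H p & h.2 = Q1.2.
    by rewrite es; apply: col_cover => //; rewrite hl /=; slia.
  have := Habove p0 pu hh hQ1H eh; rewrite eQ1 => lt.
  have [e1 _ _ _] := Hbox hp hh.
  have eh1 : h.1 = p by slia.
  have -> : (p, Q1.2) = h by rewrite -eh -eh1 -surjective_pairing.
  exact: hh.
have hpcf : (p, Q1.2) \in [seq x <- H p | x \in W q] by rewrite mem_filter hpc hy'.
have hne : [seq x <- H p | x \in W q] != [::] by apply/eqP => e; rewrite e in hpcf.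
have := mem_head_nonempty (0, 0) hne; rewrite mem_filter -/(Pf p q) => /andP[hPW hPH].
have hPc := pw_head (0, 0) (filt_pw q hp) hpcf; rewrite -/(Pf p q) in hPc.
have hP1 : (Pf p q).1 = p.
  have := no_low hp (q := q) ltac:(slia) hPH hPW; have := Hbox hp hPH; move: hPc; rewrite /le2 /=.
  by move=> /andP[h1 h2] [h3 _ _ _]; slia.
have hP2 : (Pf p q).2 = Q1.2.
  have := Wcmp hq0 hQ1W hPW; move: hPc; rewrite /le2 /= hP1 eQ1 => /andP[h1 h2] /orP[/andP[h3 h4]|/andP[h3 h4]]; slia.
split=> //.
  by rewrite hP1 hP2 [RHS]surjective_pairing eQ1.
move=> R hR eR1 hR2 p'' hp''; apply/negP => hc.
have hRp'' : R \in H p'' by apply: (mem_infix hc); rewrite !inE eqxx !orbT.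
have hs : (R.1.+1, R.2) \in H p'' by apply: (mem_infix hc); rewrite !inE eqxx.
case: (eqVneq p'' p) => epp; last by apply: (Hdis (p := p) (p' := p'') (y := R)) => //; rewrite eq_sym.
subst p''.
have := Hcmp hp hpc hs; rewrite /le2 /= eR1 => /orP[/andP[h1 h2]|/andP[h1 h2]]; first by slia.
have eRc : R.2 = Q1.2 by slia.
apply: (Hdis (p := p) (p' := p.+1) (y := Q1)) => //; first by rewrite neq_ltn ltnSn.
have eQ : (R.1.+1, R.2) = Q1 by rewrite eR1 eRc [RHS]surjective_pairing eQ1.
by rewrite -eQ.
Qed.

Theorem abstract_main p : 0 < p <= u ->
  (forall q, p.+1 + (v - u) <= q <= v -> (Pf p q).1 = p) /\
  (forall q, p + (v - u) <= q <= v -> (Qf p q).1 = p) /\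
  (forall q, p.+1 + (v - u) <= q <= v ->
     (forall R : pos, R \in H p -> R.1 = p -> (Pf p q).2 <= R.2 ->
        forall p'', 0 < p'' <= u -> ~~ nw_corner R (H p'')) /\
     ((Pf p q).1.+1, (Pf p q).2) = Qf p.+1 q).
Proof.
move=> hp; split; [|split].
- by move=> q hq; have [] := P_main (q := q) (p := p) ltac:(slia) hq.
- by move=> q hq; apply: Q_row.
- by move=> q hq; have [h1 h2 h3] := P_main (q := q) (p := p) ltac:(slia) hq.
Qed.

End Abstract.


Definition T (x : pos) : pos := (x.2, x.1).
Definition tau (s : seq pos) : seq pos := map T (rev s).

Lemma TK : involutive T. Proof. by case. Qed.
Lemma T_inj : injective T. Proof. exact: inv_inj TK. Qed.

Lemma tauK : involutive tau.
Proof. by move=> s; rewrite /tau -map_rev revK -map_comp (eq_map TK) map_id. Qed.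

Lemma mem_tau (x : pos) s : (x \in tau s) = (T x \in s).
Proof. by rewrite /tau -{1}(TK x) (mem_map T_inj) mem_rev. Qed.

Lemma lstepT x y : lstep (T y) (T x) = lstep x y.
Proof.
case: x y => [a b] [c d]; rewrite /lstep /T /=.
apply/idP/idP => /orP[/andP[/eqP h1 /eqP h2]|/andP[/eqP h1 /eqP h2]]; apply/orP; [right|left|right|left];
  apply/andP; split; apply/eqP; lia.
Qed.

Lemma sorted_tau s : sorted lstep (tau s) = sorted lstep s.
Proof.
rewrite /tau sorted_map rev_sorted; apply: eq_sorted => x y /=.
by rewrite lstepT.
Qed.

Lemma prefix_map_inj (f : pos -> pos) : injective f -> forall t s, prefix (map f t) (map f s) = prefix t s.
Proof.
move=> inj; elim=> [|a t IH] [|b s] //=.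
by rewrite (inj_eq inj) IH.
Qed.

Lemma infix_map_inj (f : pos -> pos) : injective f -> forall t s, infix (map f t) (map f s) = infix t s.
Proof.
move=> inj t; elim=> [|b s IH]; first by case: t.
rewrite [map f (b :: s)]/= !infix_consl IH.
by rewrite (prefix_map_inj inj t (b :: s) : prefix (map f t) (f b :: map f s) = _).
Qed.

Lemma se_tau R s : se_corner R (tau s) = se_corner (T R) s.
Proof.
rewrite /se_corner /tau.
have -> : [:: (R.1, R.2.-1); R; (R.1.-1, R.2)] = map T (rev [:: ((T R).1, (T R).2.-1); T R; ((T R).1.-1, (T R).2)]).
  by rewrite /= /T /rev /=; case: R.
by rewrite infix_map_inj ?infix_rev //; exact: T_inj.
Qed.

Lemma nw_tau R s : nw_corner R (tau s) = nw_corner (T R) s.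
Proof.
rewrite /nw_corner /tau.
have -> : [:: (R.1.+1, R.2); R; (R.1, R.2.+1)] = map T (rev [:: ((T R).1.+1, (T R).2); T R; ((T R).1, (T R).2.+1)]).
  by rewrite /= /T /rev /=; case: R.
by rewrite infix_map_inj ?infix_rev //; exact: T_inj.
Qed.

Lemma filter_tau s t : [seq x <- tau s | x \in tau t] = tau [seq x <- s | x \in t].
Proof.
rewrite /tau filter_map filter_rev; congr (map _ (rev _)); apply: eq_filter => x /=.
by rewrite mem_tau TK.
Qed.

Lemma head_tau (s : seq pos) : head (0, 0) (tau s) = T (last (0, 0) s).
Proof. by case/lastP: s => // s x; rewrite /tau rev_rcons last_rcons. Qed.

Lemma last_tau (s : seq pos) : last (0, 0) (tau s) = T (head (0, 0) s).
Proof. by case: s => // x s; rewrite /tau rev_cons map_rcons last_rcons. Qed.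

Lemma lpd_char a b sw ne P : lattice_path_def a b sw ne P =
  [&& P != [::], head (0, 0) P == sw, last (0, 0) P == ne, sorted lstep P & all (inbox a b) P].
Proof. by case: P => //= x s; congr andb; rewrite andbCA. Qed.

Lemma lpd_tau a b sw ne P : lattice_path_def a b sw ne P -> lattice_path_def b a (T ne) (T sw) (tau P).
Proof.
rewrite !lpd_char => /and5P[h1 /eqP h2 /eqP h3 h4 h5].
apply/and5P; split.
- by rewrite /tau; case: P h1 {h2 h3 h4 h5} => // x s _; rewrite rev_cons map_rcons; case: (map _ _).
- by rewrite head_tau h3.
- by rewrite last_tau h2.
- by rewrite sorted_tau.
- apply/allP => x; rewrite mem_tau => /(allP h5); rewrite /inbox /T /=.
  by case/andP=> -> ->.
Qed.

Definition rwin (lo m off : nat) (P : seq pos) : seq pos :=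
  [seq (x.1 - lo, off + x.2) | x <- P & lo < x.1 <= lo + m].

Lemma filter_nil (T0 : eqType) (p : pred T0) (P : seq T0) : (forall y, y \in P -> ~~ p y) -> [seq x <- P | p x] = [::].
Proof.
move=> h; apply/eqP; rewrite -[_ == _]negbK -has_filter; apply/hasP => -[y hy hp].
by move: (h y hy); rewrite hp.
Qed.

Lemma filt_win_sorted lo hi (P : seq pos) : sorted lstep P -> sorted lstep [seq x <- P | lo < x.1 <= hi].
Proof.
elim: P => // a P IH hs.
have hP := sorted_cons_inv hs.
have IH' := IH hP.
rewrite /=; case: ifP => ha; last exact: IH'.
case: P hs hP IH' {IH} => [|c P] hs hP IH' //.
move: hs => /= /andP[hac _].
move: IH'; rewrite /=; case: ifP => hc.
  by move=> h /=; rewrite hac.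
move=> _.
have hall : forall y : pos, y \in P -> ~~ (lo < y.1 <= hi).
  move=> y hy; have := head_le2 hP hy; rewrite /le2 => /andP[h1 h2].
  move/negbT: hc => hc.
  case: (lstep_cases hac) => [e|[e h0]]; move: hc h1; rewrite e /= => hc h1; apply/negP => hw; lia.
by rewrite (filter_nil hall).
Qed.

Lemma rwin_sorted lo m off P : sorted lstep P -> sorted lstep (rwin lo m off P).
Proof.
move=> hs; have hf := filt_win_sorted lo (lo + m) hs.
rewrite /rwin sorted_map.
apply: (sub_in_sorted (P := fun x : pos => lo < x.1)) _ _ hf.
  move=> x y hx hy; rewrite /relpre /lstep /= in hx hy *.
  move=> /orP[/andP[/eqP h1 /eqP h2]|/andP[/eqP h1 /eqP h2]]; apply/orP; [left|right];
    apply/andP; split; apply/eqP; lia.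
by apply/allP => x; rewrite mem_filter => /andP[/andP[h _] _].
Qed.

Lemma rwin_mem lo m off P (x : pos) : x \in P -> lo < x.1 <= lo + m -> (x.1 - lo, off + x.2) \in rwin lo m off P.
Proof. by move=> h w; apply/mapP; exists x; rewrite // mem_filter w h. Qed.

Lemma rwin_inv lo m off P (z : pos) : z \in rwin lo m off P ->
  exists2 x : pos, x \in P & lo < x.1 <= lo + m /\ z = (x.1 - lo, off + x.2).
Proof. by move=> /mapP[x]; rewrite mem_filter => /andP[w h] ->; exists x. Qed.

Lemma rwin_rows lo m off P : (forall i, lo < i <= lo + m -> exists2 y : pos, y \in P & y.1 = i) ->
  forall i, 0 < i <= m -> exists2 z : pos, z \in rwin lo m off P & z.1 = i.
Proof.
move=> h i hi; have [y hy ey] := h (lo + i) ltac:(lia).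
exists (y.1 - lo, off + y.2); first by apply: rwin_mem => //; lia.
by rewrite /= ey; lia.
Qed.

Lemma rwin_cols lo m off P Bb : (forall y : pos, y \in P -> 0 < y.2 <= Bb) ->
  forall z : pos, z \in rwin lo m off P -> off < z.2 <= off + Bb.
Proof. by move=> h z /rwin_inv[x hx [w ->]] /=; have := h x hx; lia. Qed.

Definition LeftOf (w w' : seq pos) : bool :=
  all (fun y : pos => all (fun z : pos => (y.1 == z.1) ==> (y.2 < z.2)) w') w.

Lemma LeftOfP w w' : (forall y z : pos, y \in w -> z \in w' -> y.1 = z.1 -> y.2 < z.2) -> LeftOf w w'.
Proof. by move=> h; apply/allP => y hy; apply/allP => z hz; apply/implyP => /eqP; apply: h. Qed.

Lemma LeftOfE w w' (y z : pos) : LeftOf w w' -> y \in w -> z \in w' -> y.1 = z.1 -> y.2 < z.2.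
Proof. by move=> /allP/(_ y) h hy hz e; move: (h hy) => /allP/(_ z hz); rewrite e eqxx. Qed.

Lemma rwin_left lo m off P1 P2 : LeftOf P1 P2 -> LeftOf (rwin lo m off P1) (rwin lo m off P2).
Proof.
move=> h; apply: LeftOfP => y z /rwin_inv[x hx [wx ->]] /rwin_inv[x' hx' [wx' ->]] /= e.
have := LeftOfE h hx hx' ltac:(lia); lia.
Qed.

Lemma tau_left s t : (forall x y : pos, x \in s -> y \in t -> x.2 = y.2 -> x.1 < y.1) -> LeftOf (tau s) (tau t).
Proof.
move=> h; apply: LeftOfP => y z; rewrite !mem_tau => hy hz e.
by have := h _ _ hy hz e.
Qed.

Lemma above2 (s t : seq pos) : sorted lstep s -> sorted lstep t -> s != [::] -> t != [::] ->
  (head (0, 0) s).2 = (head (0, 0) t).2 -> (head (0, 0) s).1 < (head (0, 0) t).1 ->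
  (forall z, z \in s -> z \in t -> False) ->
  forall x y : pos, x \in s -> y \in t -> x.2 = y.2 -> x.1 < y.1.
Proof.
case: s => // x0 s; case: t => // y0 t /= hs ht _ _ e1 e2 dis.
exact: (above hs ht e1 e2 dis).
Qed.


Lemma sum_sub (I : eqType) (s : seq I) (P P' : pred I) (F : I -> nat) k :
  uniq s -> k \in s -> ~~ P k -> P' k -> (forall i, P i -> P' i) ->
  \sum_(i <- s | P i) F i + F k <= \sum_(i <- s | P' i) F i.
Proof.
move=> us ks nP P'k sub.
rewrite (big_mkcond P) (big_mkcond P') (bigD1_seq k) //= [X in _ <= X](bigD1_seq k) //=.
rewrite (negbTE nP) P'k add0n addnC leq_add2l.
apply: leq_sum => i _; case: ifP => // /sub ->; exact: leqnn.
Qed.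

Lemma pw_pages (n : nat) (s : seq 'I_n) (L : 'I_n -> seq (seq pos)) (lo hi : 'I_n -> nat) :
  pairwise (fun k k' : 'I_n => k < k') s ->
  (forall k, k \in s -> pairwise LeftOf (L k)) ->
  (forall k, k \in s -> forall w, w \in L k -> forall y : pos, y \in w -> lo k < y.2 <= hi k) ->
  (forall k k', k \in s -> k' \in s -> k < k' -> hi k <= lo k') ->
  pairwise LeftOf (flatten (map L s)).
Proof.
elim: s => // k s IH /= /andP[hk hs] h1 h2 h3.
rewrite pairwise_cat; apply/and3P; split.
- apply/allrelP => w w' hw /flattenP[ws /mapP[k' hk' ->] hw'].
  have lt : k < k' by exact: (allP hk).
  apply: LeftOfP => y z hy hz _.
  have := h2 k (mem_head _ _) w hw y hy; have := h2 k' (ltac:(by rewrite inE hk' orbT)) w' hw' z hz.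
  have := h3 k k' (mem_head _ _) ltac:(by rewrite inE hk' orbT) lt; lia.
- by apply: h1; rewrite mem_head.
- apply: IH => //.
  + by move=> k0 h; apply: h1; rewrite inE h orbT.
  + by move=> k0 h; apply: h2; rewrite inE h orbT.
  + by move=> k0 k1 h h' lt; apply: h3; rewrite // inE ?h ?h' orbT.
Qed.

Lemma pw_map_iota (G : nat -> seq pos) a n :
  (forall i j, a <= i -> i < j -> j < a + n -> LeftOf (G i) (G j)) -> pairwise LeftOf (map G (iota a n)).
Proof.
move=> h; rewrite pairwise_map; apply/(pairwiseP 0) => i j; rewrite !inE size_iota => hi hj hij.
by rewrite /relpre !nth_iota //; apply: h; lia.
Qed.

Lemma pw_enum (n : nat) (P : pred 'I_n) : pairwise (fun k k' : 'I_n => k < k') [seq k <- enum 'I_n | P k].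
Proof.
apply: pairwise_filter.
have : pairwise ltn (map val (enum 'I_n)) by rewrite val_enum_ord -sorted_pairwise ?iota_ltn_sorted //; exact: ltn_trans.
by rewrite pairwise_map.
Qed.

Lemma arith_sub i j k n : k < (if j.+1 < n then j.+1 else n) - i -> [/\ i + k < j.+1, i + k < n & i + k <= j].
Proof. by case: (ltnP j.+1 n) => h hk; split; lia. Qed.

Lemma subpath_mem (s : seq pos) (x y R : pos) : R \in subpath_of s x y ->
  exists2 k, k < size s & [/\ R = nth (0, 0) s k, index x s <= k & k <= index y s].
Proof.
rewrite /subpath_of => /(nthP (0, 0)) [k' hk' <-].
rewrite size_drop size_take in hk'.
have [h1 h2 h3] := arith_sub hk'.
rewrite nth_drop nth_take //.
exists (index x s + k') => //; split=> //; exact: leq_addr.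
Qed.

Lemma pw_nth_le2 (s : seq pos) i j : pairwise le2 s -> i <= j -> j < size s -> le2 (nth (0, 0) s i) (nth (0, 0) s j).
Proof.
move=> hs; rewrite leq_eqVlt => /orP[/eqP->|lt] hj; first exact: le2_refl.
by apply: (pairwiseP (0, 0) hs); rewrite ?inE /= ?hj //; exact: ltn_trans lt hj.
Qed.

Lemma lpd_le2 a b sw ne P (y : pos) : lattice_path_def a b sw ne P -> y \in P -> le2 sw y /\ le2 y ne.
Proof.
rewrite lpd_char => /and5P[hn /eqP hh /eqP hl hs hb] hy.
have hp := sorted_le2 hs.
by split; [rewrite -hh; exact: pw_head | rewrite -hl; exact: pw_last].
Qed.


Lemma lpd_rows a b sw ne P : lattice_path_def a b sw ne P ->
  forall i, ne.1 <= i <= sw.1 -> exists2 y : pos, y \in P & y.1 = i.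
Proof.
rewrite lpd_char => /and5P[hn /eqP hh /eqP hl hs hb] i hi.
case: P hn hh hl hs hb => // x s _ /= -> hl hs _.
by apply: row_cover => //; rewrite hl.
Qed.

Lemma lpd_colc a b sw ne P : lattice_path_def a b sw ne P ->
  forall j, sw.2 <= j <= ne.2 -> exists2 y : pos, y \in P & y.2 = j.
Proof.
rewrite lpd_char => /and5P[hn /eqP hh /eqP hl hs hb] j hj.
case: P hn hh hl hs hb => // x s _ /= hh hl hs _.
by apply: col_cover => //; rewrite hl hh.
Qed.

Lemma lpd_box a b sw ne P (y : pos) : lattice_path_def a b sw ne P -> y \in P -> (0 < y.1 <= a) && (0 < y.2 <= b).
Proof. by rewrite lpd_char => /and5P[_ _ _ _ /allP hb] /hb. Qed.

Lemma lpd_sorted a b sw ne P : lattice_path_def a b sw ne P -> sorted lstep P.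
Proof. by rewrite lpd_char => /and5P[]. Qed.

Lemma lpd_ne a b sw ne P : lattice_path_def a b sw ne P -> P != [::].
Proof. by rewrite lpd_char => /and5P[]. Qed.

Lemma lpd_head a b sw ne P : lattice_path_def a b sw ne P -> head (0, 0) P = sw.
Proof. by rewrite lpd_char => /and5P[_ /eqP]. Qed.

Lemma nth_map_tau (L : seq (seq pos)) i : nth [::] (map tau L) i = tau (nth [::] L i).
Proof.
case: (ltnP i (size L)) => h; first by rewrite (nth_map [::]).
by rewrite !nth_default ?size_map.
Qed.

Lemma map_tau_flatten (I : Type) (F : I -> seq (seq pos)) (s : seq I) :
  map tau (flatten (map F s)) = flatten (map (fun k => map tau (F k)) s).
Proof. by elim: s => //= k s IH; rewrite map_cat IH. Qed.

Section Concrete.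
Variables (Q : qdata) (H : 'I_(nT Q) -> nat -> seq pos) (V : 'I_(nS Q) -> nat -> seq pos).
Hypotheses (Hstd : standing Q) (Hrm : road_map Q H V) (Hst : straight Q H V).

Lemma uniq_arrT a : uniq (arrT Q a). Proof. exact: filter_uniq (enum_uniq _). Qed.
Lemma uniq_arrS b : uniq (arrS Q b). Proof. exact: filter_uniq (enum_uniq _). Qed.
Lemma mem_arrT a k : (k \in arrT Q a) = (tgt Q k == a). Proof. by rewrite mem_filter mem_enum andbT. Qed.
Lemma mem_arrS b k : (k \in arrS Q b) = (src Q k == b). Proof. by rewrite mem_filter mem_enum andbT. Qed.

Lemma colOff_bT k : colOff Q k + mS Q (src Q k) <= bT Q (tgt Q k).
Proof.
rewrite /colOff /bT.
exact: (sum_sub (s := arrT Q (tgt Q k)) (P := fun i : 'I_(nr Q) => i < k) (P' := fun _ => true) (fun i => mS Q (src Q i)) (uniq_arrT _) ltac:(by rewrite mem_arrT) (negbT (ltnn k)) isT (fun _ _ => isT)).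
Qed.

Lemma colOff_lt k k' : tgt Q k = tgt Q k' -> k < k' -> colOff Q k + mS Q (src Q k) <= colOff Q k'.
Proof.
move=> e lt; rewrite /colOff -e.
exact: (sum_sub (s := arrT Q (tgt Q k)) (P := fun i : 'I_(nr Q) => i < k) (P' := fun i : 'I_(nr Q) => i < k') (fun i => mS Q (src Q i)) (uniq_arrT _) ltac:(by rewrite mem_arrT) (negbT (ltnn k)) lt (fun i h => ltn_trans h lt)).
Qed.

Lemma rowOff_aS k : rowOff Q k + mT Q (tgt Q k) <= aS Q (src Q k).
Proof.
rewrite /rowOff /aS.
exact: (sum_sub (s := arrS Q (src Q k)) (P := fun i : 'I_(nr Q) => i < k) (P' := fun _ => true) (fun i => mT Q (tgt Q i)) (uniq_arrS _) ltac:(by rewrite mem_arrS) (negbT (ltnn k)) isT (fun _ _ => isT)).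
Qed.

Lemma rowOff_lt k k' : src Q k = src Q k' -> k < k' -> rowOff Q k + mT Q (tgt Q k) <= rowOff Q k'.
Proof.
move=> e lt; rewrite /rowOff -e.
exact: (sum_sub (s := arrS Q (src Q k)) (P := fun i : 'I_(nr Q) => i < k) (P' := fun i : 'I_(nr Q) => i < k') (fun i => mT Q (tgt Q i)) (uniq_arrS _) ltac:(by rewrite mem_arrS) (negbT (ltnn k)) lt (fun i h => ltn_trans h lt)).
Qed.

Lemma V_lpd b q : 0 < q <= uS Q b -> lattice_path_def (aS Q b) (bS Q b) (aS Q b, q) (1, bS Q b - uS Q b + q) (V b q).
Proof. by move=> hq; case: Hrm => _ [_ [h _]]; exact: h. Qed.

Lemma H_lpd a p : 0 < p <= uT Q a -> lattice_path_def (aT Q a) (bT Q a) (aT Q a - uT Q a + p, 1) (p, bT Q a) (H a p).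
Proof. by move=> hp; case: Hrm => h _; exact: h. Qed.

Lemma V_left b i j : 0 < i -> i < j -> j <= uS Q b -> LeftOf (V b i) (V b j).
Proof.
move=> i0 ij ju.
have hi := V_lpd (b := b) (q := i) ltac:(lia).
have hj := V_lpd (b := b) (q := j) ltac:(lia).
have ti := lpd_tau hi; have tj := lpd_tau hj.
have dis : forall z, z \in tau (V b i) -> z \in tau (V b j) -> False.
  move=> z; rewrite !mem_tau => h1 h2.
  case: Hrm => _ [_ [_ hd]]; have := hd b i j i0 ij ju; move=> /hasP; apply; by exists (T z).
have ab := above2 (lpd_sorted ti) (lpd_sorted tj) (lpd_ne ti) (lpd_ne tj).
rewrite (lpd_head ti) (lpd_head tj) /= in ab.
have ab' := ab erefl ltac:(lia) dis.
apply: LeftOfP => y z hy hz e.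
have := ab' (T y) (T z); rewrite !mem_tau !TK => /(_ hy hz e).
by [].
Qed.

Lemma H_above a i j : 0 < i -> i < j -> j <= uT Q a ->
  forall x y : pos, x \in H a i -> y \in H a j -> x.2 = y.2 -> x.1 < y.1.
Proof.
move=> i0 ij ju.
have hi := H_lpd (a := a) (p := i) ltac:(lia).
have hj := H_lpd (a := a) (p := j) ltac:(lia).
have dis : forall z, z \in H a i -> z \in H a j -> False.
  move=> z h1 h2.
  case: Hrm => _ [hd _]; have := hd a i j i0 ij ju; move=> /hasP; apply; by exists z.
have ab := above2 (lpd_sorted hi) (lpd_sorted hj) (lpd_ne hi) (lpd_ne hj).
rewrite (lpd_head hi) (lpd_head hj) /= in ab.
exact: (ab erefl ltac:(lia) dis).
Qed.

Lemma VTs_mem a w : w \in VTs Q V a -> exists k, exists q,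
  [/\ tgt Q k = a, 0 < q <= uS Q (src Q k) & w = VtoT Q k (V (src Q k) q)].
Proof.
move=> /allpairsPdep[k [q [hk hq ->]]].
exists k, q; split => //; first by move: hk; rewrite mem_arrT => /eqP.
by move: hq; rewrite mem_iota; lia.
Qed.

Lemma VTs_memI k q : 0 < q <= uS Q (src Q k) -> VtoT Q k (V (src Q k) q) \in VTs Q V (tgt Q k).
Proof.
move=> hq; apply/allpairsPdep; exists k, q; split => //.
  by rewrite mem_arrT.
by rewrite mem_iota; lia.
Qed.

Lemma size_VTs a : size (VTs Q V a) = vT Q a.
Proof.
rewrite /VTs size_flatten /shape -map_comp /vT sumnE big_map.
by apply: eq_bigr => k _; rewrite /= size_map size_iota.
Qed.

Lemma V_rows b q : 0 < q <= uS Q b -> forall i, 0 < i <= aS Q b -> exists2 y : pos, y \in V b q & y.1 = i.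
Proof. by move=> hq i hi; apply: (lpd_rows (V_lpd hq)) => /=; lia. Qed.

Lemma V_cols b q : 0 < q <= uS Q b -> forall y : pos, y \in V b q -> 0 < y.2 <= bS Q b.
Proof. by move=> hq y hy; have := lpd_box (V_lpd hq) hy => /andP[]. Qed.

Lemma Wp_a a w : w \in VTs Q V a -> sorted lstep w.
Proof.
move=> /VTs_mem[k [q [hk hq ->]]].
exact: rwin_sorted (lpd_sorted (V_lpd hq)).
Qed.

Lemma Wr_a a w : w \in VTs Q V a -> forall i, 0 < i <= aT Q a -> exists2 y : pos, y \in w & y.1 = i.
Proof.
move=> /VTs_mem[k [q [hk hq ->]]] i hi.
have hr := rowOff_aS k.
apply: (rwin_rows (lo := rowOff Q k) (m := mT Q (tgt Q k))) => //.
  by move=> i' hi'; apply: V_rows => //; lia.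
by rewrite hk /aT in hi *.
Qed.

Lemma Wc_a a w : w \in VTs Q V a -> forall y : pos, y \in w -> 0 < y.2 <= bT Q a.
Proof.
move=> /VTs_mem[k [q [hk hq ->]]] y hy.
have := rwin_cols (V_cols hq) hy; have := colOff_bT k; rewrite hk /bS; lia.
Qed.

Lemma Wo_a a : pairwise LeftOf (VTs Q V a).
Proof.
apply: (pw_pages (lo := fun k => colOff Q k) (hi := fun k => colOff Q k + mS Q (src Q k))).
- exact: pw_enum.
- move=> k hk; apply: pw_map_iota => i j hi hij hj.
  apply: rwin_left; apply: V_left => //; lia.
- move=> k hk w /mapP[q hq ->] y hy.
  have := rwin_cols (V_cols (b := src Q k) (q := q) ltac:(move: hq; rewrite mem_iota; lia)) hy.
  by rewrite /bS.
- move=> k k' hk hk' lt; apply: colOff_lt => //.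
  by move: hk hk'; rewrite !mem_arrT => /eqP-> /eqP->.
Qed.

Lemma Hs_a a p (R : pos) : 0 < p <= uT Q a -> se_corner R (H a p) -> has (fun w => R \in w) (VTs Q V a).
Proof.
move=> hp hse.
case: Hst => hst _.
have [x [hxL htx hpsi [q [hq hV]]]] := hst a p R hp ltac:(by rewrite /corner hse orbT).
apply/hasP; exists (VtoT Q x.2 (V (src Q x.2) q)).
  by rewrite -htx; apply: VTs_memI.
move: hxL; rewrite /inL => /andP[/andP[h1 h2] _].
rewrite -hpsi /psiT.
have -> : ((x.1.1, colOff Q x.2 + x.1.2) : pos) = ((psiS Q x).1 - rowOff Q x.2, colOff Q x.2 + (psiS Q x).2).
  by rewrite /psiS /= addKn.
apply: rwin_mem => //; rewrite /psiS /=; lia.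
Qed.

Lemma part_a a p : 0 < p <= uT Q a ->
     (forall q', p.+1 + (vT Q a - uT Q a) <= q' <= vT Q a ->
        (PT Q H V a p q').1 = p) /\
     (forall q', p + (vT Q a - uT Q a) <= q' <= vT Q a ->
        (QT Q H V a p q').1 = p) /\
     (forall q', p.+1 + (vT Q a - uT Q a) <= q' <= vT Q a ->
        ~ has_hNW Q H V a (subpath_of (H a p) (PT Q H V a p q') (QT Q H V a p q')) /\
        ((PT Q H V a p q').1.+1, (PT Q H V a p q').2) = QT Q H V a p.+1 q').
Proof.
move=> hp.
have uv : uT Q a <= size (VTs Q V a) by rewrite size_VTs; case: Hstd => h _; case: (h a).
have := abstract_main (A := aT Q a) (B := bT Q a) (H := H a) uv (@H_lpd a)
  (fun p p' h1 h2 h3 => (Hrm.2.1 a p p' h1 h2 h3)) (@Wp_a a) (@Wr_a a) (@Wc_a a) (Wo_a a) (@Hs_a a) hp.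
rewrite size_VTs => -[A1 [A2 A3]].
split; first exact: A1.
split; first exact: A2.
move=> q' hq'; have [A3a A3b] := A3 q' hq'; split; last exact: A3b.
move=> [R [p'' [hR hp'' hnw _]]].
have [k hk [eR hk1 hk2]] := subpath_mem hR.
have hP1 : (PT Q H V a p q').1 = p := A1 q' hq'.
have hPin : PT Q H V a p q' \in H a p.
  apply/negPn/negP => hn.
  by move: hk1; rewrite memNindex // leqNgt hk.
have hsH := sorted_le2 (lpd_sorted (H_lpd hp)).
have hle : le2 (PT Q H V a p q') R.
  by rewrite eR -{1}(nth_index (0, 0) hPin); apply: pw_nth_le2.
have hRin : R \in H a p by rewrite eR mem_nth.
have [_ hle2] := lpd_le2 (H_lpd hp) hRin.
move: hle hle2; rewrite /le2 /= => /andP[l1 l2] /andP[l3 l4].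
have := A3a R hRin ltac:(rewrite /pos in hP1 l1 l3 *; lia) l2 p'' hp''.
by rewrite hnw.
Qed.

Lemma HSs_mem b w : w \in HSs Q H b -> exists k, exists p,
  [/\ src Q k = b, 0 < p <= uT Q (tgt Q k) & w = HtoS Q k (H (tgt Q k) p)].
Proof.
move=> /allpairsPdep[k [p [hk hp ->]]].
exists k, p; split => //; first by move: hk; rewrite mem_arrS => /eqP.
by move: hp; rewrite mem_iota; lia.
Qed.

Lemma HSs_memI k p : 0 < p <= uT Q (tgt Q k) -> HtoS Q k (H (tgt Q k) p) \in HSs Q H (src Q k).
Proof.
move=> hp; apply/allpairsPdep; exists k, p; split => //.
  by rewrite mem_arrS.
by rewrite mem_iota; lia.
Qed.

Lemma size_HSs b : size (HSs Q H b) = vS Q b.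
Proof.
rewrite /HSs size_flatten /shape -map_comp /vS sumnE big_map.
by apply: eq_bigr => k _; rewrite /= size_map size_iota.
Qed.

Lemma tau_HtoS k P : tau (HtoS Q k P) = rwin (colOff Q k) (mS Q (src Q k)) (rowOff Q k) (tau P).
Proof.
rewrite /tau /HtoS /rwin -map_rev -filter_rev filter_map -!map_comp.
by congr (map _ _).
Qed.

Lemma tH_lpd a p : 0 < p <= uT Q a -> lattice_path_def (bT Q a) (aT Q a) (bT Q a, p) (1, aT Q a - uT Q a + p) (tau (H a p)).
Proof. by move=> hp; exact: (lpd_tau (H_lpd hp)). Qed.

Lemma Wp_b b w : w \in map tau (HSs Q H b) -> sorted lstep w.
Proof.
move=> /mapP[w0 /HSs_mem[k [p [hk hp ->]]] ->].
rewrite tau_HtoS; exact: rwin_sorted (lpd_sorted (tH_lpd hp)).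
Qed.

Lemma Wr_b b w : w \in map tau (HSs Q H b) -> forall i, 0 < i <= bS Q b -> exists2 y : pos, y \in w & y.1 = i.
Proof.
move=> /mapP[w0 /HSs_mem[k [p [hk hp ->]]] ->] i hi.
rewrite tau_HtoS.
have hr := colOff_bT k.
apply: (rwin_rows (lo := colOff Q k) (m := mS Q (src Q k))) => //.
  by move=> i' hi'; apply: (lpd_rows (tH_lpd hp)) => /=; lia.
by rewrite hk /bS in hi *.
Qed.

Lemma Wc_b b w : w \in map tau (HSs Q H b) -> forall y : pos, y \in w -> 0 < y.2 <= aS Q b.
Proof.
move=> /mapP[w0 /HSs_mem[k [p [hk hp ->]]] ->] y.
rewrite tau_HtoS => hy.
have hc : forall z : pos, z \in tau (H (tgt Q k) p) -> 0 < z.2 <= aT Q (tgt Q k).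
  by move=> z hz; have := lpd_box (tH_lpd hp) hz => /andP[].
have := rwin_cols hc hy; have := rowOff_aS k; rewrite hk /aT; lia.
Qed.

Lemma Wo_b b : pairwise LeftOf (map tau (HSs Q H b)).
Proof.
rewrite /HSs map_tau_flatten.
apply: (pw_pages (lo := fun k => rowOff Q k) (hi := fun k => rowOff Q k + mT Q (tgt Q k))).
- exact: pw_enum.
- move=> k hk; rewrite -map_comp; apply: pw_map_iota => i j hi hij hj.
  rewrite /= !tau_HtoS; apply: rwin_left; apply: tau_left; apply: H_above => //; lia.
- move=> k hk w /mapP[w0 /mapP[p hp ->] ->] y.
  rewrite tau_HtoS => hy.
  have hp' : 0 < p <= uT Q (tgt Q k) by move: hp; rewrite mem_iota; lia.
  have hc : forall z : pos, z \in tau (H (tgt Q k) p) -> 0 < z.2 <= aT Q (tgt Q k).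
    by move=> z hz; have := lpd_box (tH_lpd hp') hz => /andP[].
  by have := rwin_cols hc hy; rewrite /aT.
- move=> k k' hk hk' lt; apply: rowOff_lt => //.
  by move: hk hk'; rewrite !mem_arrS => /eqP-> /eqP->.
Qed.

Lemma Hs_b b q (R : pos) : 0 < q <= uS Q b -> se_corner R (tau (V b q)) -> has (fun w => R \in w) (map tau (HSs Q H b)).
Proof.
move=> hq; rewrite se_tau => hse.
case: Hst => _ hst.
have [x [hxL hsx hpsi [p [hp hH]]]] := hst b q (T R) hq ltac:(by rewrite /corner hse orbT).
apply/hasP; exists (tau (HtoS Q x.2 (H (tgt Q x.2) p))).
  by apply: map_f; rewrite -hsx; apply: HSs_memI.
rewrite mem_tau -hpsi /psiS.
move: hxL; rewrite /inL => /andP[_ /andP[h1 h2]].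
apply/mapP; exists (psiT Q x); last by rewrite /psiT /= addKn.
by rewrite mem_filter hH /psiT /=; apply/andP; split; lia.
Qed.

Lemma Pf_b b q p' : Pf (fun q => tau (V b q)) (map tau (HSs Q H b)) q p' = T (QS Q H V b p' q).
Proof. by rewrite /Pf nth_map_tau filter_tau head_tau. Qed.

Lemma Qf_b b q p' : Qf (fun q => tau (V b q)) (map tau (HSs Q H b)) q p' = T (PS Q H V b p' q).
Proof. by rewrite /Qf nth_map_tau filter_tau last_tau. Qed.

Lemma part_b b q : 0 < q <= uS Q b ->
     (forall p', q.+1 + (vS Q b - uS Q b) <= p' <= vS Q b ->
        (QS Q H V b p' q).2 = q) /\
     (forall p', q + (vS Q b - uS Q b) <= p' <= vS Q b ->
        (PS Q H V b p' q).2 = q) /\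
     (forall p', q.+1 + (vS Q b - uS Q b) <= p' <= vS Q b ->
        ~ has_vNW Q H V b (subpath_of (V b q) (PS Q H V b p' q) (QS Q H V b p' q)) /\
        ((QS Q H V b p' q).1, (QS Q H V b p' q).2.+1) = PS Q H V b p' q.+1).
Proof.
move=> hq.
have uv : uS Q b <= size (map tau (HSs Q H b)) by rewrite size_map size_HSs; case: Hstd => _ h; case: (h b).
have Hd : forall p p', 0 < p -> p < p' -> p' <= uS Q b -> ~~ has (fun x => x \in tau (V b p')) (tau (V b p)).
  move=> p p' h1 h2 h3; apply/hasP => -[x]; rewrite !mem_tau => hx hx'.
  case: Hrm => _ [_ [_ hd]]; have := hd b p p' h1 h2 h3; move=> /hasP; apply; by exists (T x).
have := abstract_main (A := bS Q b) (B := aS Q b) (H := fun q => tau (V b q)) uv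
  (fun q hq => lpd_tau (V_lpd hq)) Hd (@Wp_b b) (@Wr_b b) (@Wc_b b) (Wo_b b) (@Hs_b b) hq.
rewrite size_map size_HSs => -[A1 [A2 A3]].
split; first by move=> p' hp'; have := A1 p' hp'; rewrite Pf_b.
split; first by move=> p' hp'; have := A2 p' hp'; rewrite Qf_b.
move=> p' hp'; have [A3a A3b] := A3 p' hp'; split.
  move=> [R [q'' [hR hq'' hnw _]]].
  have [k hk [eR hk1 hk2]] := subpath_mem hR.
  have hQ2 : (QS Q H V b p' q).2 = q by have := A1 p' hp'; rewrite Pf_b.
  have hQin : QS Q H V b p' q \in V b q.
    have hne : [seq x <- V b q | x \in HS Q H b p'] != [::].
      apply/eqP => e; move: hQ2; rewrite /QS e /=; lia.
    by have := mem_last_nonempty (0, 0) hne; rewrite mem_filter => /andP[].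
  have hsV := sorted_le2 (lpd_sorted (V_lpd hq)).
  have hle : le2 R (QS Q H V b p' q).
    rewrite eR -[X in le2 _ X](nth_index (0, 0) hQin); apply: pw_nth_le2 => //.
    by rewrite index_mem.
  have hRin : R \in V b q by rewrite eR mem_nth.
  have [hle1 _] := lpd_le2 (V_lpd hq) hRin.
  move: hle hle1; rewrite /le2 /= => /andP[l1 l2] /andP[l3 l4].
  have := A3a (T R) ltac:(by rewrite mem_tau TK) ltac:(rewrite /T /=; rewrite /pos in hQ2 l2 l4 *; lia).
  rewrite Pf_b /T /= => /(_ l1 q'' hq'').
  by rewrite nw_tau TK hnw.
move: A3b; rewrite Pf_b Qf_b /T /= => -[e1 e2].
by rewrite [RHS]surjective_pairing -e1 -e2.
Qed.

End Concrete.

Theorem lemma3p3 (Q : qdata)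
  (H : 'I_(nT Q) -> nat -> seq pos) (V : 'I_(nS Q) -> nat -> seq pos)
  (Hstd : standing Q) (Hrm : road_map Q H V) (Hst : straight Q H V) :
  (forall (a : 'I_(nT Q)) (p : nat), 0 < p <= uT Q a ->
     (forall q', p.+1 + (vT Q a - uT Q a) <= q' <= vT Q a ->
        (PT Q H V a p q').1 = p) /\
     (forall q', p + (vT Q a - uT Q a) <= q' <= vT Q a ->
        (QT Q H V a p q').1 = p) /\
     (forall q', p.+1 + (vT Q a - uT Q a) <= q' <= vT Q a ->
        ~ has_hNW Q H V a (subpath_of (H a p) (PT Q H V a p q') (QT Q H V a p q')) /\
        ((PT Q H V a p q').1.+1, (PT Q H V a p q').2) = QT Q H V a p.+1 q')) /\
  (forall (b : 'I_(nS Q)) (q : nat), 0 < q <= uS Q b ->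
     (forall p', q.+1 + (vS Q b - uS Q b) <= p' <= vS Q b ->
        (QS Q H V b p' q).2 = q) /\
     (forall p', q + (vS Q b - uS Q b) <= p' <= vS Q b ->
        (PS Q H V b p' q).2 = q) /\
     (forall p', q.+1 + (vS Q b - uS Q b) <= p' <= vS Q b ->
        ~ has_vNW Q H V b (subpath_of (V b q) (PS Q H V b p' q) (QS Q H V b p' q)) /\
        ((QS Q H V b p' q).1, (QS Q H V b p' q).2.+1) = PS Q H V b p' q.+1)).
Proof.
split.
- by move=> a p hp; exact: (part_a Hstd Hrm Hst hp).
- by move=> b q hq; exact: (part_b Hstd Hrm Hst hq).
Qed.
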